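(* Let $H$ and $E$ be Hilbert spaces, let $T:H\to H$ be a bounded linear operator with $\ker T=\{0\}$, and let $\gamma:E\to H$ be a bounded linear operator with $\ker\gamma=\{0\}$ and $\mathcal{R}(T)\cap\mathcal{R}(\gamma)=\{0\}$. Define linear maps $A:\mathcal{D}(A)\to H$ and $\Gamma_0:\mathcal{D}(A)\to E$ on $\mathcal{D}(A)=\mathcal{R}(T)\dot+\mathcal{R}(\gamma)$ by $A(Tf+\gamma\varphi)=f$ and $\Gamma_0(Tf+\gamma\varphi)=\varphi$ for $f\in H$, $\varphi\in E$. If $\lambda\in\mathbb{C}$ is such that $I-\lambda T$ is boundedly invertible in $H$, then for every $f\in H$ and $\varphi\in E$ the problem of finding $u\in\mathcal{D}(A)$ with \[(A-\lambda I)u=f,\qquad \Gamma_0u=\varphi\] has a unique solution, namely \[u=T(I-\lambda T)^{-1}f+(I-\lambda T)^{-1}\gamma\varphi .\]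
   Context: $\mathcal{R}(\cdot)$ denotes the range of an operator and $\dot+$ a direct sum of linear subspaces; $A$ and $\Gamma_0$ are well defined by the stated injectivity and trivial-intersection assumptions. *)

(* Defs.v *)
From HB Require Import structures.
From mathcomp Require Import all_boot all_order all_algebra.
From mathcomp Require Import all_classical all_reals all_analysis.
From mathcomp Require Import complex.
Set Implicit Arguments. Unset Strict Implicit. Unset Printing Implicit Defensive.
Import Order.TTheory GRing.Theory Num.Theory ComplexField.
Import numFieldNormedType.Exports.
Local Open Scope ring_scope.
Local Open Scope classical_set_scope.

Definition is_inner_product (R : realType) (H : normedModType R[i])
  (ip : H -> H -> R[i]) : Prop :=
  [/\ forall (a : R[i]) (x y z : H), ip (a *: x + y) z = a * ip x z + ip y z,
      forall x y : H, ip y x = (ip x y)^*%C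
    & forall x : H, `|x| ^+ 2 = ip x x].

Definition hilbert_space (R : realType) (H : completeNormedModType R[i]) : Prop :=
  exists ip : H -> H -> R[i], is_inner_product ip.

Definition domA (K : ringType) (H E : lmodType K) (T : H -> H) (g : E -> H)
  : set H := [set u | exists (f : H) (phi : E), u = T f + g phi].

(* A (T f + gamma phi) = f ;  Gamma0 (T f + gamma phi) = phi.
   Well defined by injectivity of T, gamma and R(T) /\ R(gamma) = {0};
   the value outside D(A) is irrelevant (set to 0). *)
Definition opA (K : ringType) (H E : lmodType K) (T : H -> H) (g : E -> H)
  (u : H) : H :=
  match pselect (exists p : H * E, u = T p.1 + g p.2) with
  | left e => (projT1 (cid e)).1
  | right _ => 0
  end.

Definition Gamma0 (K : ringType) (H E : lmodType K) (T : H -> H) (g : E -> H)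
  (u : H) : E :=
  match pselect (exists p : H * E, u = T p.1 + g p.2) with
  | left e => (projT1 (cid e)).2
  | right _ => 0
  end.

(* Main.v *)
Require Import Defs.
From HB Require Import structures.
From mathcomp Require Import all_boot all_order all_algebra.
From mathcomp Require Import all_classical all_reals all_analysis.
From mathcomp Require Import complex.
Import Order.TTheory GRing.Theory Num.Theory ComplexField.
Import numFieldNormedType.Exports.
Local Open Scope ring_scope.
Local Open Scope classical_set_scope.

Section Helpers.
Variables (K : ringType) (H E : lmodType K) (T : {linear H -> H}) (g : {linear E -> H}).
Hypothesis kerT : forall x : H, T x = 0 -> x = 0.
Hypothesis kerg : forall y : E, g y = 0 -> y = 0.
Hypothesis ranTg : forall (x : H) (y : E), T x = g y -> T x = 0.

Lemma decomp_uniq a b a' b' : T a + g b = T a' + g b' -> a = a' /\ b = b'.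
Proof.
move=> e.
have e1 : T (a - a') = g (b' - b).
  rewrite !raddfB /= -(addrK (g b) (T a)) e.
  by rewrite -!addrA addrC -!addrA addNr addr0 addrC.
have Ta := @ranTg _ _ e1.
have ha : a = a' by apply/eqP; rewrite -subr_eq0; apply/eqP; apply: kerT.
split=> //.
have : g (b' - b) = 0 by rewrite -e1.
by move/kerg/eqP; rewrite subr_eq0 => /eqP.
Qed.

Lemma opA_val a b : opA T g (T a + g b) = a.
Proof.
rewrite /opA; case: pselect => [e|[]]; last by exists (a, b).
by case: (cid e) => p /= hp; have [-> _] := decomp_uniq _ _ _ _ hp.
Qed.

Lemma Gamma0_val a b : Gamma0 T g (T a + g b) = b.
Proof.
rewrite /Gamma0; case: pselect => [e|[]]; last by exists (a, b).
by case: (cid e) => p /= hp; have [_ ->] := decomp_uniq _ _ _ _ hp.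
Qed.
End Helpers.

Theorem theorem1 (R : realType) (H E : completeNormedModType R[i])
  (hH : hilbert_space H) (hE : hilbert_space E)
  (T : {linear H -> H}) (g : {linear E -> H})
  (Tcont : continuous T) (gcont : continuous g)
  (kerT : forall x : H, T x = 0 -> x = 0)
  (kerg : forall y : E, g y = 0 -> y = 0)
  (ranTg : forall (x : H) (y : E), T x = g y -> T x = 0)
  (lambda : R[i])
  (S : {linear H -> H}) (Scont : continuous S)
  (SL : forall x : H, S (x - lambda *: T x) = x)
  (LS : forall x : H, S x - lambda *: T (S x) = x) :
  forall (f : H) (phi : E),
    (exists! u : H, domA T g u /\ opA T g u - lambda *: u = f /\ Gamma0 T g u = phi) /\
    (forall u : H, (domA T g u /\ opA T g u - lambda *: u = f /\ Gamma0 T g u = phi)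
                   <-> u = T (S f) + S (g phi)).
Proof.
move=> f phi.
have SE : forall x, S x = T (lambda *: S x) + x.
  by move=> x; rewrite linearZ /= -{3}(LS x) addrC subrK.
have key : forall u, (domA T g u /\ opA T g u - lambda *: u = f /\ Gamma0 T g u = phi)
                   <-> u = T (S f) + S (g phi).
  move=> u; split.
    move=> [[a [b ->]] [ha hb]].
    move: ha hb; rewrite opA_val // Gamma0_val // => ha hb; subst b.
    have ea : a - lambda *: T a = f + lambda *: g phi.
      by rewrite -ha scalerDr opprD addrA subrK.
    have : S (a - lambda *: T a) = S (f + lambda *: g phi) by rewrite ea.
    rewrite SL linearD linearZ /= => ->.
    by rewrite linearD linearZ /= -addrA -linearZ -SE.
  move=> ->.
  have hu : T (S f) + S (g phi) = T (S f + lambda *: S (g phi)) + g phi.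
    by rewrite linearD /= -addrA -SE.
  rewrite hu opA_val // Gamma0_val //; split; [by exists (S f + lambda *: S (g phi)), phi|split=>//].
  rewrite -hu scalerDr opprD addrA addrAC addrK -linearZ /=.
  by rewrite linearZ /= LS.
split=> //.
exists (T (S f) + S (g phi)); split; first by apply/key.
by move=> u /key ->.
Qed.
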